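(* Let $T$ be a measure-preserving automorphism of a standard probability Borel space $(X,\mathcal{B},\mu)$, where $X$ is endowed with a metric $d$ generating the $\sigma$-algebra $\mathcal{B}$. Let $\{W_n\}_{n\in\mathbb{N}}$ be measurable subsets of $X$ and $\{q_n\}_{n\in\mathbb{N}}$ an increasing sequence of natural numbers. If $\sup_{x\in W_n}d(T^{q_n}x,x)\to 0$, then $\{q_n\}$ is a rigidity sequence for $T$ along $\{W_n\}$.
   Context: $\{q_n\}$ is a rigidity sequence for $T$ along $\{W_n\}$ if $\mu((T^{-q_n}A\,\triangle\, A)\cap W_n)\to 0$ for every $A\in\mathcal{B}$. *)

(* Defs.v *)
From HB Require Import structures.
From mathcomp Require Import all_boot all_order all_algebra.
From mathcomp Require Import all_classical all_reals all_analysis.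
Set Implicit Arguments. Unset Strict Implicit. Unset Printing Implicit Defensive.
Import Order.TTheory GRing.Theory Num.Theory.
Local Open Scope classical_set_scope.
Local Open Scope ring_scope.

Definition is_metric (R : realType) (X : Type) (d : X -> X -> R) : Prop :=
  [/\ forall x y, 0 <= d x y,
      forall x y, d x y = 0 <-> x = y,
      forall x y, d x y = d y x &
      forall x y z, d x z <= d x y + d y z].

Definition metric_open (R : realType) (X : Type) (d : X -> X -> R)
  (U : set X) : Prop :=
  forall x, U x -> exists2 r : R, 0 < r & [set y | d x y < r] `<=` U.

Definition metric_borel (R : realType) (X : Type) (d : X -> X -> R) : set (set X) :=
  <<s metric_open d >>.

Definition mp_automorphism (dsp : measure_display) (X : measurableType dsp)
  (R : realType) (mu : set X -> \bar R) (T : X -> X) : Prop :=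
  [/\ bijective T,
      measurable_fun setT T,
      (forall A, measurable A -> measurable (T @` A)) &
      forall A, measurable A -> mu (T @^-1` A) = mu A].

Definition rigidity_along (dsp : measure_display) (X : measurableType dsp)
  (R : realType) (mu : set X -> \bar R) (T : X -> X) (q : nat -> nat)
  (W : nat -> set X) : Prop :=
  forall A, measurable A ->
    (fun n => mu ((((iter (q n) T) @^-1` A) `+` A) `&` W n)) @ \oo --> 0%E.

(* Main.v *)
Require Import Defs.
From HB Require Import structures.
From mathcomp Require Import all_boot all_order all_algebra.
From mathcomp Require Import all_classical all_reals all_analysis.
From mathcomp Require Import lra.
Import Order.TTheory GRing.Theory Num.Theory.
Local Open Scope classical_set_scope.
Local Open Scope ring_scope.

Section aux.
Variable R : realType.
Local Open Scope ereal_scope.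

Lemma ecvg0 (u : nat -> \bar R) : (forall n, 0 <= u n) ->
  (forall n, u n \is a fin_num) ->
  (forall e : R, (0 < e)%R -> \forall n \near \oo, u n <= e%:E) ->
  u @ \oo --> 0.
Proof.
move=> u0 uf h; apply/fine_cvgP; split; first exact: nearW.
apply/cvgr0Pnorm_lt => e e0.
have e2 : (0 < e / 2)%R by rewrite divr_gt0.
apply: filterS (h (e / 2)%R e2).
move=> n hn /=; rewrite -(fineK (uf n)) lee_fin in hn.
rewrite ger0_norm; last by rewrite fine_ge0.
by rewrite (le_lt_trans hn)// ltr_pdivrMr// ltr_pMr// ltr1n.
Qed.

Lemma ecvg0' (u : nat -> \bar R) :
  (forall n, u n \is a fin_num) -> u @ \oo --> 0 ->
  (forall e : R, (0 < e)%R -> \forall n \near \oo, u n <= e%:E).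
Proof.
move=> uf /fine_cvgP [_ /cvgr0Pnorm_lt h] e e0.
apply: filterS (h e e0) => n /= hn.
by rewrite -(fineK (uf n)) lee_fin (le_trans (ler_norm _))// ltW.
Qed.
End aux.

Section main.
Variables (R : realType) (dsp : measure_display) (X : measurableType dsp)
  (mu : probability X R) (T : X -> X) (W : nat -> set X) (q : nat -> nat).
Hypothesis mT : measurable_fun setT T.
Hypothesis muT : forall A, measurable A -> mu (T @^-1` A) = mu A.
Hypothesis mW : forall n, measurable (W n).
Local Open Scope ereal_scope.

Lemma mpre A : measurable A -> measurable (T @^-1` A).
Proof. by move=> mA; rewrite -[T @^-1` A]setTI; apply: mT. Qed.

Lemma miter k A : measurable A -> measurable (iter k T @^-1` A).
Proof.
elim: k A => [//|k IH] A mA.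
have -> : iter k.+1 T @^-1` A = iter k T @^-1` (T @^-1` A) by [].
by apply: IH; apply: mpre.
Qed.

Lemma muiter k A : measurable A -> mu (iter k T @^-1` A) = mu A.
Proof.
elim: k A => [//|k IH] A mA.
have -> : iter k.+1 T @^-1` A = iter k T @^-1` (T @^-1` A) by [].
by rewrite IH ?muT//; apply: mpre.
Qed.

Lemma mu_fin A : measurable A -> mu A \is a fin_num.
Proof.
move=> mA; rewrite ge0_fin_numE ?measure_ge0//.
exact: (le_lt_trans (probability_le1 mu mA) (ltry _)).
Qed.

Definition D n A := ((iter (q n) T @^-1` A) `+` A) `&` W n.

Definition good A := measurable A /\
  forall e : R, (0 < e)%R -> \forall n \near \oo, mu (D n A) <= e%:E.

Lemma mD n A : measurable A -> measurable (D n A).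
Proof.
move=> mA; apply: measurableI => //; rewrite /setY.
by apply: measurableU; apply: measurableD => //; apply: miter.
Qed.

Lemma DsubC n A : D n A `<=` D n (~` A).
Proof.
move=> x [[[h1 h2]|[h1 h2]] hw]; split=> //.
  by right; split.
by left; split.
Qed.

Lemma DC n A : D n (~` A) `<=` D n A.
Proof. by rewrite -{2}(setCK A); apply: DsubC. Qed.

Lemma DU n A B : D n (A `|` B) `<=` D n A `|` D n B.
Proof.
move=> x [[[h1 h2]|[h1 h2]] hw].
  case: h1 => h1.
    by left; split=> //; left; split=> // ?; apply: h2; left.
  by right; split=> //; left; split=> // ?; apply: h2; right.
case: h1 => h1.
  by left; split=> //; right; split=> // ?; apply: h2; left.
by right; split=> //; right; split=> // ?; apply: h2; right.
Qed.

Lemma Dsub n A : D n A `<=` (iter (q n) T @^-1` A) `|` A.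
Proof. by move=> x [[[h1 h2]|[h1 h2]] hw]; [left|right]. Qed.

Lemma good0 : good set0.
Proof.
split=> // e e0; apply: nearW => n.
rewrite (_ : D n set0 = set0) ?measure0 ?lee_fin ?ltW//.
by apply/seteqP; split=> x // [[[]|[]]].
Qed.

Lemma goodC A : good A -> good (~` A).
Proof.
move=> [mA h]; split; first exact: measurableC.
move=> e e0; apply: filterS (h e e0) => n hn.
apply: le_trans hn; apply: le_measure; rewrite ?inE; try apply: mD => //.
  exact: measurableC.
exact: DC.
Qed.

Lemma goodU A B : good A -> good B -> good (A `|` B).
Proof.
move=> [mA hA] [mB hB]; split; first exact: measurableU.
move=> e e0; have e2 : (0 < e / 2)%R by rewrite divr_gt0.
apply: filterS2 (hA _ e2) (hB _ e2) => n h1 h2.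
apply: le_trans.
  apply: le_measure; rewrite ?inE; last exact: DU.
    by apply: mD; apply: measurableU.
  by apply: measurableU; apply: mD.
apply: le_trans; first by apply: measureU2; apply: mD.
by apply: le_trans (leeD h1 h2) _; rewrite -EFinD -splitr.
Qed.


Lemma bigcupS_eq (F : (set X)^nat) N :
  \bigcup_(i < N.+1) F i = \bigcup_(i < N) F i `|` F N.
Proof.
apply/seteqP; split=> x.
  move=> [i /= hi Fi]; move: hi; rewrite ltnS leq_eqVlt => /orP [/eqP e|hi].
    by right; rewrite -e.
  by left; exists i.
move=> [[i /= hi Fi]|FN]; first by exists i => //=; rewrite ltnS ltnW.
by exists N => /=.
Qed.

Lemma goodP (F : (set X)^nat) N : (forall i, good (F i)) ->
  good (\bigcup_(i < N) F i).
Proof.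
move=> gF; elim: N => [|N IH].
  rewrite (_ : \bigcup_(i < 0) F i = set0); first exact: good0.
  by apply/seteqP; split=> x // [i].
by rewrite bigcupS_eq; apply: goodU.
Qed.

Lemma goodI (F : (set X)^nat) : (forall i, good (F i)) ->
  good (\bigcup_i F i).
Proof.
move=> gF; set A := \bigcup_i F i.
have mA : measurable A by apply: bigcupT_measurable => i; case: (gF i).
pose P N := \bigcup_(i < N) F i.
have mP N : measurable (P N) by case: (@goodP F N gF).
pose C N := A `\` P N.
have mC N : measurable (C N) by apply: measurableD.
have niC : nonincreasing_seq C.
  move=> n m nm; apply/subsetPset => x [Ax nPx]; split=> // -[i /= hi Fi].
  by apply: nPx; exists i => //=; apply: leq_trans nm.
have cap : \bigcap_n C n = set0.
  apply/seteqP; split=> x // hx.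
  have [Ax _] := hx 0%N I.
  case: Ax => i _ Fi.
  by have [_] := hx i.+1 I; apply; exists i => /=.
have h0 : mu (C 0%N) < +oo.
  by apply: le_lt_trans (probability_le1 mu (mC 0%N)) _; exact: ltry.
have := nonincreasing_cvg_mu h0 mC _ niC.
rewrite cap measure0 => /(_ measurable0) cvg.
split=> // e e0.
have e30 : (0 < e / 3)%R by rewrite divr_gt0.
have [K _ hK] := @ecvg0' R (mu \o C) (fun n => mu_fin (C n) (mC n)) cvg _ e30.
have hK' : mu (C K) <= (e / 3)%:E := hK K (leqnn K).
have [_ hP] := @goodP F K gF.
apply: filterS (hP _ e30) => n hn.
have AE : A = P K `|` C K.
  by rewrite setDUK // => x [i /= _ Fi]; exists i.
have sub : D n A `<=` D n (P K) `|` ((iter (q n) T @^-1` C K) `|` C K).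
  rewrite {1}AE => x /DU [h|h]; first by left.
  by right; apply: Dsub.
apply: le_trans.
  apply: le_measure; rewrite ?inE; last exact: sub.
    exact: mD.
  by apply: measurableU; [apply: mD|apply: measurableU => //; apply: miter].
apply: le_trans; first by apply: measureU2; [apply: mD|apply: measurableU => //; apply: miter].
have h2 : mu ((iter (q n) T @^-1` C K) `|` C K) <= (e / 3)%:E + (e / 3)%:E.
  apply: le_trans; first by apply: measureU2 => //; apply: miter.
  apply: leeD => //; apply: le_trans hK'.
  by rewrite le_eqVlt; apply/orP; left; apply/eqP; apply: muiter.
apply: le_trans (leeD hn h2) _.
by rewrite -!EFinD lee_fin; lra.
Qed.

Section opens.
Variable d : X -> X -> R.
Hypothesis dm : is_metric d.
Hypothesis hB : forall A, measurable A <-> metric_borel d A.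
Hypothesis hq : forall e : R, (0 < e)%R -> \forall n \near \oo,
      forall x, W n x -> (d (iter (q n) T x) x <= e)%R.

Lemma mopen U : metric_open d U -> measurable U.
Proof. by move=> hU; apply/hB; apply: sub_gen_smallest. Qed.

Lemma Nopen U r : metric_open d [set x | exists y, ~ U y /\ (d x y < r)%R].
Proof.
move=> x [y [nUy dxy]]; exists (r - d x y)%R; first by rewrite subr_gt0.
move=> z /= dz; exists y; split=> //; have [_ _ sym tri] := dm.
have := tri z x y; rewrite (sym z x) => h; lra.
Qed.

Lemma goodOpen U : metric_open d U -> good U.
Proof.
move=> hU; have mU := mopen _ hU; split=> // e e0.
pose N r := [set x | exists y, ~ U y /\ (d x y < r)%R].
pose V (k : nat) := U `&` N (k.+1%:R^-1)%R.
have mV k : measurable (V k) by apply: measurableI => //; apply: mopen; apply: (Nopen U).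
have niV : nonincreasing_seq V.
  move=> n m nm; apply/subsetPset => x [Ux [y [ny dy]]]; split=> //; exists y; split=> //.
  apply: lt_le_trans dy _; rewrite lef_pV2 ?posrE// ler_nat ltnS //.
have cap : \bigcap_n V n = set0.
  apply/seteqP; split=> x // hx.
  have [Ux _] := hx 0%N I.
  have [r r0 ball] := hU x Ux.
  have [k _ hk] := near_infty_natSinv_lt (PosNum r0).
  have hk' := hk k (leqnn k).
  have [_ [y [ny dy]]] := hx k I.
  by apply: ny; apply: ball => /=; apply: lt_trans dy _.
have h0 : mu (V 0%N) < +oo.
  by apply: le_lt_trans (probability_le1 mu (mV 0%N)) _; exact: ltry.
have := nonincreasing_cvg_mu h0 mV _ niV.
rewrite cap measure0 => /(_ measurable0) cvg.
have e20 : (0 < e / 2)%R by rewrite divr_gt0.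
have [K _ hK] := @ecvg0' R (mu \o V) (fun n => mu_fin (V n) (mV n)) cvg _ e20.
have hK' : mu (V K) <= (e / 2)%:E := hK K (leqnn K).
have kp : (0 < K.+1%:R^-1 :> R)%R by rewrite invr_gt0.
have e'0 : (0 < K.+1%:R^-1 / 2 :> R)%R by rewrite divr_gt0.
have hq0 := hq _ e'0. apply: filterS hq0 => n hn.
have [_ _ sym _] := dm.
have sub : D n U `<=` (iter (q n) T @^-1` V K) `|` V K.
  move=> x [[[h1 h2]|[h1 h2]] hw].
    left; split=> //; exists x; split=> //.
    apply: le_lt_trans (hn x hw) _; by rewrite ltr_pdivrMr // ltr_pMr // ltr1n.
  right; split=> //; exists (iter (q n) T x); split=> //.
  rewrite sym; apply: le_lt_trans (hn x hw) _; by rewrite ltr_pdivrMr // ltr_pMr // ltr1n.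
apply: le_trans.
  apply: le_measure; rewrite ?inE; last exact: sub.
    exact: mD.
  by apply: measurableU => //; apply: miter.
apply: le_trans; first by apply: measureU2 => //; apply: miter.
have h1 : mu (iter (q n) T @^-1` V K) <= (e / 2)%:E.
  apply: le_trans hK'.
  by rewrite le_eqVlt; apply/orP; left; apply/eqP; apply: muiter.
apply: le_trans (leeD h1 hK') _.
by rewrite -EFinD -splitr.
Qed.

Lemma final A : measurable A -> (fun n => mu (D n A)) @ \oo --> 0.
Proof.
move=> mA.
have gA : good A.
  apply: (@smallest_sub _ (sigma_algebra setT) (metric_open d) good); last first.
  - exact/hB.
  - by move=> U; apply: goodOpen.
  split; first exact: good0.
    by move=> B gB; rewrite setTD; apply: goodC.
  exact: goodI.
apply: ecvg0 => [n|n|]; first exact: measure_ge0.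
  by apply: mu_fin; apply: mD.
by case: gA.
Qed.

End opens.
End main.

Theorem lemma3p3 (R : realType) (dsp : measure_display) (X : measurableType dsp)
  (mu : probability X R) (d : X -> X -> R) (T : X -> X)
  (W : nat -> set X) (q : nat -> nat) :
  is_metric d ->
  (forall A : set X, measurable A <-> metric_borel d A) ->
  mp_automorphism mu T ->
  (forall n, measurable (W n)) ->
  {homo q : m n / (m < n)%N >-> (m < n)%N} ->
  (forall e : R, 0 < e -> \forall n \near \oo,
      forall x, W n x -> d (iter (q n) T x) x <= e) ->
  rigidity_along mu T q W.
Proof.
move=> dm hB [_ mT _ muT] mW _ hq A mA.
exact: (@final R dsp X mu T W q mT muT mW d dm hB hq A mA).
Qed.
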